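(* Let $n\ge1$. For every assertion $\varphi$, every environment $\eta$ of ordinary variables, every $\rho:\mathsf{AVar}\to\mathsf{IRel}_1$ and every $\rho':\mathsf{AVar}\to\mathsf{IRel}_n$ such that $\Delta_n(\rho(a))=\rho'(a)$ for all $a\in\mathsf{AVar}$, we have $\Delta_n([\![\varphi]\!]^1_{\eta,\rho})=[\![\varphi]\!]^n_{\eta,\rho'}$.
   Context: $\mathsf{Heap}$ is the set of finite partial functions from $\mathsf{PosInt}$ to $\mathsf{Int}$; $[]$ is the empty heap; $h\cdot g$ is the union of heaps with disjoint domains; $g\sqsubseteq h$ means $h$ extends $g$. On $\mathsf{Heap}^n$, $\sqsubseteq$ and $\cdot$ are componentwise. $\mathsf{IRel}_n$ is the set of $\sqsubseteq$-upward closed subsets of $\mathsf{Heap}^n$. For $p,q\in\mathsf{IRel}_n$, $p*q=\{\mathbf f\cdot\mathbf g\mid\mathbf f\in p,\mathbf g\in q,\text{ componentwise disjoint domains}\}$. For $X\subseteq\mathsf{Heap}$, $\Delta_n(X)=\{(h_1,\dots,h_n)\mid\exists f\in X.\ f\sqsubseteq h_k\text{ for all }k\}$. Assertions are built from primitive assertions $P$ (such as $E\hookrightarrow F$ for integer expressions $E,F$, and heap-independent boolean conditions), assertion variables $a\in\mathsf{AVar}$, $\mathsf{true}$, $\mathsf{false}$, $\wedge$, $\vee$, $*$, and quantifiers $\exists x,\forall x$ over ordinary integer variables (no implication or separating implication). An environment $\eta$ maps ordinary variables to integers; each primitive $P$ has a meaning $[\![P]\!]^{\mathrm{prim}}_\eta\subseteq\mathsf{Heap}$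 (e.g. $E\hookrightarrow F$ denotes the heaps $h$ with $[\![E]\!]_\eta\in\operatorname{dom}(h)$ and $h([\![E]\!]_\eta)=[\![F]\!]_\eta$). Given $\eta$ and $\rho:\mathsf{AVar}\to\mathsf{IRel}_n$, the $n$-ary meaning $[\![\varphi]\!]^n_{\eta,\rho}\in\mathsf{IRel}_n$ is: $[\![P]\!]^n=\Delta_n([\![P]\!]^{\mathrm{prim}}_\eta)$, $[\![a]\!]^n=\rho(a)$, $[\![\mathsf{true}]\!]^n=\mathsf{Heap}^n$, $[\![\mathsf{false}]\!]^n=\emptyset$, $\wedge,\vee,*$ are interpreted by $\cap,\cup,*$, $\exists x$ by the union over $v\in\mathsf{Int}$ of the meanings under $\eta[x\mapsto v]$, and $\forall x$ by the corresponding intersection. *)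

(* Defs.v *)
From Stdlib Require Import ZArith List.
From Stdlib Require Fin.
Import ListNotations.

Record Heap : Type := mkHeap {
  hfun : positive -> option Z;
  hfin : exists l : list positive, forall p, hfun p <> None -> In p l
}.

Definition hext (g h : Heap) : Prop :=
  forall p v, hfun g p = Some v -> hfun h p = Some v.

Definition hjoin (f g h : Heap) : Prop :=
  forall p, (hfun f p = None \/ hfun g p = None) /\
            hfun h p = match hfun f p with Some v => Some v | None => hfun g p end.

Definition HTuple (n : nat) : Type := Fin.t n -> Heap.

Definition text {n} (g h : HTuple n) : Prop := forall k, hext (g k) (h k).

Definition upclosed {n} (P : HTuple n -> Prop) : Prop :=
  forall g h, text g h -> P g -> P h.

Record IRel (n : nat) : Type := mkIRel {
  irel : HTuple n -> Prop;
  irel_up : upclosed irel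
}.
Arguments irel {n} _ _.

Definition tstar {n} (p q : HTuple n -> Prop) : HTuple n -> Prop :=
  fun h => exists f g, p f /\ q g /\ forall k, hjoin (f k) (g k) (h k).

Definition Delta (n : nat) (X : Heap -> Prop) : HTuple n -> Prop :=
  fun h => exists f, X f /\ forall k, hext f (h k).

Definition as1 (h : Heap) : HTuple 1 := fun _ => h.

Definition var := nat.
Definition avar := nat.
Definition env := var -> Z.
Definition upd (eta : env) (x : var) (v : Z) : env :=
  fun y => if Nat.eqb y x then v else eta y.

Inductive assertion (Prim : Type) : Type :=
| APrim : Prim -> assertion Prim
| AVarA : avar -> assertion Prim
| ATrue : assertion Prim
| AFalse : assertion Prim
| AAnd : assertion Prim -> assertion Prim -> assertion Prim
| AOr : assertion Prim -> assertion Prim -> assertion Prim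
| AStar : assertion Prim -> assertion Prim -> assertion Prim
| AEx : var -> assertion Prim -> assertion Prim
| AAll : var -> assertion Prim -> assertion Prim.
Arguments APrim {Prim} _.
Arguments AVarA {Prim} _.
Arguments ATrue {Prim}.
Arguments AFalse {Prim}.
Arguments AAnd {Prim} _ _.
Arguments AOr {Prim} _ _.
Arguments AStar {Prim} _ _.
Arguments AEx {Prim} _ _.
Arguments AAll {Prim} _ _.

Definition expr := env -> Z.
Inductive std_prim : Type :=
| PPointsTo : expr -> expr -> std_prim
| PCond : (env -> Prop) -> std_prim.

Definition std_prim_sem (P : std_prim) (eta : env) : Heap -> Prop :=
  match P with
  | PPointsTo E F => fun h => exists p, Zpos p = E eta /\ hfun h p = Some (F eta)
  | PCond b => fun _ => b eta
  end.

Fixpoint sem {Prim : Type} (prim_sem : Prim -> env -> Heap -> Prop) (n : nat)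
    (rho : avar -> IRel n) (phi : assertion Prim) (eta : env) : HTuple n -> Prop :=
  match phi with
  | APrim P => Delta n (prim_sem P eta)
  | AVarA a => irel (rho a)
  | ATrue => fun _ => True
  | AFalse => fun _ => False
  | AAnd p q => fun h => sem prim_sem n rho p eta h /\ sem prim_sem n rho q eta h
  | AOr p q => fun h => sem prim_sem n rho p eta h \/ sem prim_sem n rho q eta h
  | AStar p q => tstar (sem prim_sem n rho p eta) (sem prim_sem n rho q eta)
  | AEx x p => fun h => exists v : Z, sem prim_sem n rho p (upd eta x v) h
  | AAll x p => fun h => forall v : Z, sem prim_sem n rho p (upd eta x v) h
  end.

(* Main.v *)
Require Import Defs.
From Stdlib Require Import ZArith List Lia.
From Stdlib Require Fin.
From Stdlib Require Import ClassicalEpsilon.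
Import ListNotations.

Lemma fin1_eq (k : Fin.t 1) : k = Fin.F1.
Proof.
  apply (Fin.caseS' k (fun k => k = Fin.F1)); [reflexivity|].
  intros k'; apply (Fin.case0 (fun k' => Fin.FS k' = Fin.F1) k').
Qed.

Lemma hext_refl h : hext h h.
Proof. intros p v H; exact H. Qed.

Lemma hext_trans a b c : hext a b -> hext b c -> hext a c.
Proof. unfold hext; auto. Qed.

Program Definition hempty : Heap := mkHeap (fun _ => None) _.
Next Obligation. exists nil. intros p H; congruence. Qed.

Definition minusf (h f : Heap) (p : positive) : option Z :=
  match hfun f p with Some _ => None | None => hfun h p end.
Lemma minus_fin (h f : Heap) : exists l : list positive, forall p, minusf h f p <> None -> In p l.
Proof.
  unfold minusf. destruct (hfin h) as [l Hl]. exists l. intros p H. apply Hl.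
  destruct (hfun f p); congruence.
Qed.
Definition hminus (h f : Heap) : Heap := mkHeap (minusf h f) (minus_fin h f).

Definition unionf (a b : Heap) (p : positive) : option Z :=
  match hfun a p with Some v => Some v | None => hfun b p end.
Lemma union_fin (a b : Heap) : exists l : list positive, forall p, unionf a b p <> None -> In p l.
Proof.
  unfold unionf. destruct (hfin a) as [l1 H1]. destruct (hfin b) as [l2 H2]. exists (l1 ++ l2).
  intros p H. apply in_or_app. destruct (hfun a p) eqn:E.
  - left. apply H1. congruence.
  - right. apply H2. exact H.
Qed.
Definition hunion (a b : Heap) : Heap := mkHeap (unionf a b) (union_fin a b).

Definition meetf {n} (h : HTuple (S n)) (p : positive) : option Z :=
  match hfun (h Fin.F1) p with
  | Some v => if excluded_middle_informative (forall k, hfun (h k) p = Some v)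
              then Some v else None
  | None => None
  end.

Lemma meet_fin {n} (h : HTuple (S n)) :
  exists l : list positive, forall p, meetf h p <> None -> In p l.
Proof.
  destruct (hfin (h Fin.F1)) as [l Hl]. exists l. intros p H. apply Hl.
  unfold meetf in H. destruct (hfun (h Fin.F1) p); congruence.
Qed.

Definition hmeet {n} (h : HTuple (S n)) : Heap := mkHeap (meetf h) (meet_fin h).

Definition hupc (X : Heap -> Prop) := forall g g', hext g g' -> X g -> X g'.

Lemma meet_lemma {n} (X : Heap -> Prop) (h : HTuple (S n)) :
  hupc X -> (Delta (S n) X h <-> X (hmeet h)).
Proof.
  intros HX; split.
  - intros [f [Xf Hf]]. apply (HX f); auto.
    intros p v Hp. simpl; unfold minusf, unionf in *. unfold meetf.
    rewrite (Hf Fin.F1 p v Hp).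
    destruct (excluded_middle_informative _) as [_|Hn]; auto.
    exfalso; apply Hn; intros k; apply Hf; auto.
  - intros Hm. exists (hmeet h). split; auto.
    intros k p v. simpl; unfold minusf, unionf in *. unfold meetf.
    destruct (hfun (h Fin.F1) p); [|congruence].
    destruct (excluded_middle_informative _) as [Hk|]; [|congruence].
    intros E; inversion E; subst; auto.
Qed.

Lemma tstar_up {n} (p q : HTuple n -> Prop) :
  upclosed p -> upclosed q -> upclosed (tstar p q).
Proof.
  intros Hp Hq h h' Hhh' [f [g [pf [qg J]]]].
  exists f, (fun k => hminus (h' k) (f k)). split; auto. split.
  - apply (Hq g); auto. intros k x v Hx. simpl; unfold minusf, unionf in *.
    destruct (J k x) as [[D|D] E].
    + rewrite D. apply Hhh'. rewrite E, D. exact Hx.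
    + congruence.
  - intros k x. simpl; unfold minusf, unionf in *. destruct (J k x) as [D E].
    destruct (hfun (f k) x) eqn:F.
    + split; auto. apply Hhh'. rewrite E. auto.
    + split; auto.
Qed.

Lemma sem_up {Prim} (ps : Prim -> env -> Heap -> Prop) n rho phi :
  forall eta, upclosed (sem ps n rho phi eta).
Proof.
  induction phi; intros eta; simpl; unfold minusf, unionf in *.
  - intros g h Hgh [f [Xf Hf]]. exists f; split; auto.
    intros k; eapply hext_trans; eauto.
  - apply irel_up.
  - intros g h _ _; auto.
  - intros g h _ F; auto.
  - intros g h Hgh [A B]; split; [eapply IHphi1|eapply IHphi2]; eauto.
  - intros g h Hgh [A|B]; [left; eapply IHphi1|right; eapply IHphi2]; eauto.
  - apply tstar_up; auto.
  - intros g h Hgh [w Hw]; exists w; eapply IHphi; eauto.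
  - intros g h Hgh Hw w; eapply IHphi; eauto.
Qed.

Lemma sem1_up {Prim} (ps : Prim -> env -> Heap -> Prop) rho phi eta :
  hupc (fun g => sem ps 1 rho phi eta (as1 g)).
Proof.
  intros g g' H. apply sem_up. intros k; exact H.
Qed.

Lemma as1_F1 {Prim} (ps : Prim -> env -> Heap -> Prop) rho phi eta (f : HTuple 1) :
  sem ps 1 rho phi eta f -> sem ps 1 rho phi eta (as1 (f Fin.F1)).
Proof.
  apply sem_up. intros k. rewrite (fin1_eq k). apply hext_refl.
Qed.

Lemma main_aux (Prim : Type) (prim_sem : Prim -> env -> Heap -> Prop)
  (n : nat) (phi : assertion Prim)
  (rho : avar -> IRel 1) (rho' : avar -> IRel (S n))
  (Hrho : forall (a : avar) (h : HTuple (S n)),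
      Delta (S n) (fun g => irel (rho a) (as1 g)) h <-> irel (rho' a) h) :
  forall eta (h : HTuple (S n)),
    Delta (S n) (fun g => sem prim_sem 1 rho phi eta (as1 g)) h <->
    sem prim_sem (S n) rho' phi eta h.
Proof.
  induction phi; intros eta h.
  - simpl; unfold minusf, unionf in *. split.
    + intros [g [[f [Pf Hf]] Hg]]. exists f; split; auto.
      intros k; eapply hext_trans; [apply (Hf Fin.F1)|apply Hg].
    + intros [f [Pf Hf]]. exists f; split; auto.
      exists f; split; auto. intros k; apply hext_refl.
  - simpl; unfold minusf, unionf in *. apply Hrho.
  - simpl; unfold minusf, unionf in *. split; auto. intros _. exists hempty. split; auto.
    intros k p v H; simpl in H; congruence.
  - simpl; unfold minusf, unionf in *. split; [intros [f [F _]]; contradiction | contradiction].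
  - rewrite meet_lemma by apply sem1_up. simpl; unfold minusf, unionf in *.
    rewrite <- IHphi1, <- IHphi2.
    rewrite !meet_lemma by apply sem1_up. tauto.
  - rewrite meet_lemma by apply sem1_up. simpl; unfold minusf, unionf in *.
    rewrite <- IHphi1, <- IHphi2.
    rewrite !meet_lemma by apply sem1_up. tauto.
  - simpl; unfold minusf, unionf in *. split.
    + intros [g [[f1 [f2 [P1 [P2 J]]]] Hg]].
      pose (a := f1 Fin.F1). pose (b := f2 Fin.F1).
      assert (Ja := J Fin.F1). change (forall p, (hfun a p = None \/ hfun b p = None) /\
         hfun g p = match hfun a p with Some v => Some v | None => hfun b p end) in Ja.
      assert (Sa := as1_F1 _ _ _ _ _ P1). assert (Sb := as1_F1 _ _ _ _ _ P2).
      fold a in Sa. fold b in Sb. clearbody a b.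
      exists (fun _ => a), (fun k => hminus (h k) a). split; [|split].
      * apply IHphi1. exists a. split; [auto|].
        intros k; apply hext_refl.
      * apply IHphi2. exists b. split; [auto|].
        intros k x v Hx. simpl; unfold minusf, unionf in *. destruct (Ja x) as [[D|D] E].
        -- rewrite D. apply Hg. rewrite E, D. exact Hx.
        -- congruence.
      * intros k x. simpl; unfold minusf, unionf in *. destruct (Ja x) as [D E].
        destruct (hfun a x) eqn:F.
        -- split; auto. apply Hg. exact E.
        -- split; auto.
    + intros [F [G [PF [PG J]]]].
      apply IHphi1 in PF. apply IHphi2 in PG.
      destruct PF as [a [Pa Ha]]. destruct PG as [b [Pb Hb]].
      exists (hunion a b). split.
      * exists (as1 a), (as1 b). split; auto. split; auto.
        intros k x. simpl; unfold minusf, unionf in *. split; auto.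
        destruct (J Fin.F1 x) as [[D|D] _].
        -- destruct (hfun a x) eqn:E; auto. left.
           pose proof (Ha Fin.F1 x z E). congruence.
        -- destruct (hfun b x) eqn:E; auto. left.
           pose proof (Hb Fin.F1 x z E). destruct (hfun a x) eqn:E'; auto.
           pose proof (Ha Fin.F1 x z0 E'). congruence.
      * intros k x v. simpl; unfold minusf, unionf in *. destruct (J k x) as [_ E].
        destruct (hfun a x) eqn:Ea.
        -- intros Hv; inversion Hv; subst. rewrite E. rewrite (Ha k x v Ea). auto.
        -- intros Hv. rewrite E. pose proof (Hb k x v Hv) as HB.
           destruct (hfun (F k) x) eqn:EF; auto.
           destruct (J k x) as [[D|D] _]; congruence.
  - rewrite meet_lemma by apply sem1_up. simpl; unfold minusf, unionf in *. split.
    + intros [w Hw]. exists w. apply IHphi. rewrite meet_lemma by apply sem1_up. auto.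
    + intros [w Hw]. exists w. apply IHphi in Hw. rewrite meet_lemma in Hw by apply sem1_up. auto.
  - rewrite meet_lemma by apply sem1_up. simpl; unfold minusf, unionf in *. split.
    + intros Hw w. apply IHphi. rewrite meet_lemma by apply sem1_up. auto.
    + intros Hw w. specialize (Hw w). apply IHphi in Hw. rewrite meet_lemma in Hw by apply sem1_up. auto.
Qed.

Theorem mainTheorem2 (Prim : Type) (prim_sem : Prim -> env -> Heap -> Prop)
  (n : nat) (Hn : 1 <= n) (phi : assertion Prim) (eta : env)
  (rho : avar -> IRel 1) (rho' : avar -> IRel n)
  (Hrho : forall (a : avar) (h : HTuple n),
      Delta n (fun g => irel (rho a) (as1 g)) h <-> irel (rho' a) h) :
  forall h : HTuple n,
    Delta n (fun g => sem prim_sem 1 rho phi eta (as1 g)) h <->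
    sem prim_sem n rho' phi eta h.
Proof.
  destruct n as [|n]; [lia|].
  apply main_aux; auto.
Qed.
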